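(* Let $\Gamma=A\ast B$ with $A,B$ non-trivial, let $f=f_A\ast f_B$ be a split quasimorphism, and let $\sigma$ be an inner automorphism of $\Gamma$. Then $f$ is at bounded distance from $f^\sigma$; in particular $\omega_f=\omega_{f^\sigma}$ and $S=S^\sigma$. Consequently, for $\tau\in\mathrm{Aut}(\Gamma)$ the space $S^\tau$ only depends on the outer class of $\tau$.
   Context: Quasimorphisms $f_A:A\to\mathbb{R}$, $f_B:B\to\mathbb{R}$ are alternating ($f(x^{-1})=-f(x)$). For a free product $P\ast Q$, each non-trivial element has a unique normal form $p_1q_1\cdots p_nq_n$ ($p_i\in P$, $q_i\in Q$, all non-trivial except possibly $p_1$ or $q_n$), and the split quasimorphism is $(f_P\ast f_Q)(1)=0$, $(f_P\ast f_Q)(p_1q_1\cdots p_nq_n)=f_P(p_1)+f_Q(q_1)+\dots+f_P(p_n)+f_Q(q_n)$. For $\tau\in\mathrm{Aut}(\Gamma)$, $\Gamma=\tau(A)\ast\tau(B)$ is again a splitting, and $f^\tau:=f_{\tau(A)}\ast f_{\tau(B)}$ (split with respect to this splitting) where $f_{\tau(A)}=f_A\circ\tau^{-1}|_{\tau(A)}$, $f_{\tau(B)}=f_B\circ\tau^{-1}|_{\tau(B)}$. $\omega_f\in\mathrm{H}^2_\mathrm{b}(\Gamma,\mathbb{R})$ is the bounded class of $\partial f(g,h)=f(g)+f(h)-f(gh)$. $S\subset\mathrm{H}^2_\mathrm{b}(\Gamma,\mathbb{R})$ is the space of split classes of the splitting $A\ast B$, i.e. the set of classes $\omega_{f_A\ast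 f_B}$ with $f_A,f_B$ bounded alternating functions on $A,B$; $S^\tau$ is the corresponding space for the splitting $\tau(A)\ast\tau(B)$. *)

(* Defs.v *)
From Stdlib Require Import Reals List ClassicalEpsilon.
Open Scope R_scope.
Set Implicit Arguments.

Record group := Group {
  gcar :> Type;
  gmul : gcar -> gcar -> gcar;
  ginv : gcar -> gcar;
  gone : gcar;
  gmulA : forall x y z, gmul x (gmul y z) = gmul (gmul x y) z;
  gmul1 : forall x, gmul gone x = x;
  gmulV : forall x, gmul (ginv x) x = gone
}.

Arguments gmul {g} _ _.
Arguments ginv {g} _.

Section Defs.
Context {G : group}.

Definition subgroup (P : G -> Prop) : Prop :=
  P (gone G) /\ (forall x y, P x -> P y -> P (gmul x y)) /\
  (forall x, P x -> P (ginv x)).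

Definition nontrivial (P : G -> Prop) : Prop := exists x, P x /\ x <> gone G.

(** Words in A and B: letters tagged [true] lie in A, [false] in B. *)
Definition letter_ok (A B : G -> Prop) (l : bool * G) : Prop :=
  (if fst l then A (snd l) else B (snd l)) /\ snd l <> gone G.

Fixpoint alternating_tags (w : list (bool * G)) : Prop :=
  match w with
  | nil => True
  | l :: w' =>
      match w' with
      | nil => True
      | l' :: _ => fst l <> fst l' /\ alternating_tags w'
      end
  end.

Definition reduced (A B : G -> Prop) (w : list (bool * G)) : Prop :=
  Forall (letter_ok A B) w /\ alternating_tags w.

Definition wprod (w : list (bool * G)) : G :=
  fold_right (fun (l : bool * G) (acc : G) => gmul (snd l) acc) (gone G) w.

(** G is the (internal) free product A * B: unique normal form. *)
Definition free_product (A B : G -> Prop) : Prop :=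
  subgroup A /\ subgroup B /\
  forall g : G, exists! w, reduced A B w /\ wprod w = g.

Definition wsum (fA fB : G -> R) (w : list (bool * G)) : R :=
  fold_right (fun (l : bool * G) (acc : R) => (if fst l then fA (snd l) else fB (snd l)) + acc) 0 w.

(** The split quasimorphism fA * fB w.r.t. the splitting A * B
    (value on the normal form; well defined when [free_product A B]). *)
Definition split_fun (A B : G -> Prop) (fA fB : G -> R) (g : G) : R :=
  epsilon (inhabits 0)
    (fun r => exists w, reduced A B w /\ wprod w = g /\ r = wsum fA fB w).

Definition alternating_on (P : G -> Prop) (f : G -> R) : Prop :=
  forall x, P x -> f (ginv x) = - f x.

Definition quasimorphism_on (P : G -> Prop) (f : G -> R) : Prop :=
  exists D, forall x y, P x -> P y -> Rabs (f x + f y - f (gmul x y)) <= D.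

Definition bounded_on (P : G -> Prop) (f : G -> R) : Prop :=
  exists C, forall x, P x -> Rabs (f x) <= C.

Definition bounded (f : G -> R) : Prop := exists C, forall x, Rabs (f x) <= C.

Definition dcob (f : G -> R) (g h : G) : R := f g + f h - f (gmul g h).

(** Two 2-cochains define the same class in H^2_b(G,R):
    they differ by the coboundary of a bounded 1-cochain. *)
Definition same_bclass (c1 c2 : G -> G -> R) : Prop :=
  exists b : G -> R, bounded b /\ forall g h, c1 g h - c2 g h = dcob b g h.

(** Membership of a class (represented by c) in the space S of split
    classes of the splitting A * B. *)
Definition in_split_space (A B : G -> Prop) (c : G -> G -> R) : Prop :=
  exists fA fB : G -> R,
    bounded_on A fA /\ alternating_on A fA /\
    bounded_on B fB /\ alternating_on B fB /\
    same_bclass c (dcob (split_fun A B fA fB)).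

Definition ghom (t : G -> G) : Prop := forall x y, t (gmul x y) = gmul (t x) (t y).

Definition automorphism (t : G -> G) : Prop :=
  ghom t /\ (forall x y, t x = t y -> x = y) /\ (forall y, exists x, t x = y).

Definition img (t : G -> G) (P : G -> Prop) (y : G) : Prop := exists x, P x /\ t x = y.

Definition conj (g x : G) : G := gmul (gmul g x) (ginv g).

End Defs.

(* Main.v *)
Require Import Defs.
From Stdlib Require Import Reals List Lra ClassicalEpsilon FunctionalExtensionality PropExtensionality.
Open Scope R_scope.

Lemma gmulV' {G : group} (x : G) : gmul x (ginv x) = gone G.
Proof.
  rewrite <- (gmul1 G (gmul x (ginv x))).
  rewrite <- (gmulV G (ginv x)) at 1.
  rewrite <- gmulA. rewrite (gmulA _ (ginv x) x (ginv x)). rewrite gmulV, gmul1.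
  apply gmulV.
Qed.

Lemma gmul1r {G : group} (x : G) : gmul x (gone G) = x.
Proof. rewrite <- (gmulV G x), gmulA, gmulV', gmul1. reflexivity. Qed.

Lemma inv_uniq {G : group} (x y : G) : gmul x y = gone G -> y = ginv x.
Proof. intro H. rewrite <- (gmul1 G y), <- (gmulV G x), <- gmulA, H, gmul1r. reflexivity. Qed.

Lemma ginv_inv {G : group} (x : G) : ginv (ginv x) = x.
Proof. symmetry. apply inv_uniq. apply gmulV. Qed.

Lemma ginv_mul {G : group} (x y : G) : ginv (gmul x y) = gmul (ginv y) (ginv x).
Proof. symmetry. apply inv_uniq. rewrite <- gmulA, (gmulA _ y), gmulV', gmul1, gmulV'. reflexivity. Qed.

Lemma ginv_one {G : group} : ginv (gone G) = gone G.
Proof. symmetry. apply inv_uniq. apply gmul1. Qed.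

Lemma gcancel_l {G : group} (a x y : G) : gmul a x = gmul a y -> x = y.
Proof. intro H. rewrite <- (gmul1 G x), <- (gmul1 G y), <- (gmulV G a), <- !gmulA, H. reflexivity. Qed.

Lemma conj_inv_conj {G : group} (g x : G) : conj (ginv g) (conj g x) = x.
Proof. unfold conj. rewrite ginv_inv. rewrite !gmulA, gmulV, gmul1, <- !gmulA, gmulV, gmul1r. reflexivity. Qed.

Lemma conj_conj_inv {G : group} (g x : G) : conj g (conj (ginv g) x) = x.
Proof. rewrite <- (ginv_inv g) at 1. apply conj_inv_conj. Qed.

Lemma conj_ghom {G : group} (g : G) : ghom (conj g).
Proof. intros x y. unfold conj. rewrite !gmulA. rewrite <- (gmulA _ _ (ginv g) g), gmulV, gmul1r. reflexivity. Qed.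

Lemma conj_aut {G : group} (g : G) : automorphism (conj g).
Proof.
  split; [apply conj_ghom|split].
  - intros x y H. rewrite <- (conj_inv_conj g x), <- (conj_inv_conj g y), H. reflexivity.
  - intro y. exists (conj (ginv g) y). apply conj_conj_inv.
Qed.

Lemma wprod_app {G : group} (u v : list (bool * G)) : wprod (u ++ v) = gmul (wprod u) (wprod v).
Proof. induction u as [|l u IH]; simpl. - rewrite gmul1; auto. - rewrite IH, gmulA; auto. Qed.

Lemma wsum_app {G : group} (fA fB : G -> R) (u v : list (bool * G)) : wsum fA fB (u ++ v) = wsum fA fB u + wsum fA fB v.
Proof. induction u as [|l u IH]; simpl. - lra. - rewrite IH; lra. Qed.

Lemma alt_tail {G : group} (l : bool * G) w : alternating_tags (l :: w) -> alternating_tags w.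
Proof. destruct w; simpl; tauto. Qed.

Lemma reduced_tail {G : group} A B (l : bool * G) w : reduced A B (l :: w) -> reduced A B w.
Proof. intros [H1 H2]. split. inversion H1; auto. eapply alt_tail; eauto. Qed.

Lemma alt_map {G : group} (h : bool * G -> bool * G) (Hh : forall l, fst (h l) = fst l) w :
  alternating_tags (map h w) <-> alternating_tags w.
Proof.
  induction w as [|l w IH]. simpl; tauto.
  destruct w as [|l' w]. simpl; tauto.
  change (fst (h l) <> fst (h l') /\ alternating_tags (map h (l' :: w)) <->
          fst l <> fst l' /\ alternating_tags (l' :: w)). rewrite !Hh. tauto.
Qed.

Lemma alt_snoc {G : group} (w : list (bool * G)) : forall l l',
  alternating_tags (w ++ l' :: nil) -> fst l' <> fst l -> alternating_tags (w ++ l' :: l :: nil).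
Proof.
  induction w as [|x w IH]; intros l l' H Hn; simpl in *. tauto.
  destruct w as [|y w]; simpl in *. tauto.
  destruct H as [H1 H2]. split; auto. apply (IH l l' H2 Hn).
Qed.

Lemma alt_rev_aux {G : group} (w : list (bool * G)) : forall x,
  alternating_tags (x :: w) -> alternating_tags (rev w ++ x :: nil).
Proof.
  induction w as [|y w IH]; intros x H; simpl in *. auto.
  destruct H as [H1 H2]. rewrite <- app_assoc. simpl. apply alt_snoc; auto.
Qed.

Lemma alt_rev {G : group} (w : list (bool * G)) : alternating_tags w -> alternating_tags (rev w).
Proof. destruct w as [|x w]; simpl. auto. apply alt_rev_aux. Qed.

Definition Pt {G : group} (A B : G -> Prop) (b : bool) (x : G) : Prop := if b then A x else B x.
Definition ft {G : group} (fA fB : G -> R) (b : bool) (x : G) : R := if b then fA x else fB x.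

Lemma letter_ok_Pt {G : group} A B (b : bool) (a : G) : letter_ok A B (b, a) <-> Pt A B b a /\ a <> gone G.
Proof. unfold letter_ok, Pt. simpl. tauto. Qed.

Lemma wsum_cons {G : group} fA fB (b : bool) (a : G) w : wsum fA fB ((b, a) :: w) = ft fA fB b a + wsum fA fB w.
Proof. reflexivity. Qed.

Lemma split_eval {G : group} (A B : G -> Prop) fA fB w :
  free_product A B -> reduced A B w -> split_fun A B fA fB (wprod w) = wsum fA fB w.
Proof.
  intros [_ [_ HU]] Hw. unfold split_fun.
  destruct (epsilon_spec (inhabits 0) (fun r => exists w0, reduced A B w0 /\ wprod w0 = wprod w /\ r = wsum fA fB w0))
    as [w' [Hr [Hp ->]]].
  - exists (wsum fA fB w), w; auto.
  - destruct (HU (wprod w)) as [w0 [_ Hu]].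
    rewrite <- (Hu w' (Logic.conj Hr Hp)), <- (Hu w (Logic.conj Hw eq_refl)). reflexivity.
Qed.

Lemma wsum_ext {G : group} (A B : G -> Prop) fA fB fA' fB' (w : list (bool*G)) :
  (forall a, A a -> fA a = fA' a) -> (forall a, B a -> fB a = fB' a) ->
  Forall (letter_ok A B) w -> wsum fA fB w = wsum fA' fB' w.
Proof.
  intros HA HB H. induction H as [|[b a] w Hl Hw IH]; simpl. auto.
  rewrite IH. destruct Hl as [Hl _]; destruct b; simpl in *; [rewrite HA|rewrite HB]; auto.
Qed.

Lemma split_ext {G : group} (A B : G -> Prop) fA fB fA' fB' x :
  free_product A B -> (forall a, A a -> fA a = fA' a) -> (forall a, B a -> fB a = fB' a) ->
  split_fun A B fA fB x = split_fun A B fA' fB' x.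
Proof.
  intros HF HA HB. destruct HF as [h1 [h2 HU]] eqn:E. destruct (HU x) as [w [[Hw Hp] _]].
  rewrite <- Hp, !split_eval; auto. eapply wsum_ext; eauto. apply Hw.
Qed.

Lemma hom_one {G : group} (t : G -> G) : ghom t -> t (gone G) = gone G.
Proof. intro H. apply (gcancel_l (t (gone G))). rewrite <- H, gmul1, gmul1r. reflexivity. Qed.

Lemma hom_inv {G : group} (t : G -> G) x : ghom t -> t (ginv x) = ginv (t x).
Proof. intro H. apply inv_uniq. rewrite <- H, gmulV', hom_one; auto. Qed.

Definition tmap {G : group} (t : G -> G) (w : list (bool * G)) := map (fun l => (fst l, t (snd l))) w.

Lemma wprod_tmap {G : group} (t : G -> G) w : ghom t -> wprod (tmap t w) = t (wprod w).
Proof. intro H. induction w as [|l w IH]; simpl. symmetry; apply hom_one; auto. rewrite IH, H. reflexivity. Qed.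

Lemma img_sub {G : group} (t : G -> G) P : ghom t -> subgroup P -> subgroup (img t P).
Proof.
  intros Ht [H1 [H2 H3]]. split; [|split].
  - exists (gone G). split; auto. apply hom_one; auto.
  - intros x y [a [Ha <-]] [b [Hb <-]]. exists (gmul a b). split; auto.
  - intros x [a [Ha <-]]. exists (ginv a). split; auto. apply hom_inv; auto.
Qed.

Lemma reduced_tmap {G : group} (t : G -> G) A B w : ghom t -> (forall x y, t x = t y -> x = y) ->
  reduced A B w -> reduced (img t A) (img t B) (tmap t w).
Proof.
  intros Ht Hi [H1 H2]. split.
  - unfold tmap. apply Forall_map. eapply Forall_impl; [|exact H1].
    intros [b a] [Ha Hn]. simpl in *. split.
    + destruct b; exists a; auto.
    + intro E. apply Hn, Hi. simpl in E. rewrite E, hom_one; auto.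
  - unfold tmap. apply alt_map; auto.
Qed.

Lemma pullback {G : group} (t : G -> G) A B w' : ghom t ->
  reduced (img t A) (img t B) w' -> exists w, reduced A B w /\ tmap t w = w'.
Proof.
  intros Ht [H1 H2].
  assert (E : exists w, Forall (letter_ok A B) w /\ tmap t w = w').
  { clear H2. induction H1 as [|[b a'] w' Hl Hw IH].
    - exists nil; split; auto.
    - destruct IH as [w [Hw1 Hw2]].
      destruct Hl as [Hl Hn]. simpl in *.
      assert (exists a, Pt A B b a /\ t a = a') as [a [Ha Hta]].
      { destruct b; destruct Hl as [a [Ha Hta]]; exists a; auto. }
      exists ((b, a) :: w). split.
      + constructor; auto. apply letter_ok_Pt. split; auto.
        intro E; apply Hn. rewrite <- Hta, E, hom_one; auto.
      + simpl. rewrite Hw2, Hta. reflexivity. }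
  destruct E as [w [Hw1 Hw2]]. exists w. split; auto. split; auto.
  rewrite <- Hw2 in H2. unfold tmap in H2. apply alt_map in H2; auto.
Qed.

Lemma free_img {G : group} (t : G -> G) A B : automorphism t -> free_product A B ->
  free_product (img t A) (img t B).
Proof.
  intros [Ht [Hi Hs]] [HA [HB HU]]. split; [apply img_sub; auto|split; [apply img_sub; auto|]].
  intro y. destruct (Hs y) as [x <-]. destruct (HU x) as [w [[Hw Hp] Hu]].
  exists (tmap t w). split.
  - split. apply reduced_tmap; auto. rewrite wprod_tmap, Hp; auto.
  - intros w'' [Hr Hp']. destruct (pullback t A B w'' Ht Hr) as [w0 [Hw0 <-]].
    f_equal. apply Hu. split; auto. apply Hi. rewrite <- wprod_tmap; auto.
Qed.

Lemma wsum_tmap {G : group} (t : G -> G) hA hB w :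
  wsum hA hB (tmap t w) = wsum (fun a => hA (t a)) (fun a => hB (t a)) w.
Proof. induction w as [|[[|] a] w IH]; simpl; auto; rewrite IH; auto. Qed.

Lemma split_img {G : group} (t : G -> G) A B hA hB x : automorphism t -> free_product A B ->
  split_fun (img t A) (img t B) hA hB (t x) = split_fun A B (fun a => hA (t a)) (fun a => hB (t a)) x.
Proof.
  intros Ha HF. pose proof (free_img t A B Ha HF) as HF'.
  destruct Ha as [Ht [Hi Hs]].
  destruct HF as [h1 [h2 HU]] eqn:E. destruct (HU x) as [w [[Hw Hp] _]].
  rewrite <- Hp, <- wprod_tmap, !split_eval; auto. apply wsum_tmap.
  apply reduced_tmap; auto.
Qed.

Lemma Rabs_spec (e : R) : (0 <= e /\ Rabs e = e) \/ (e < 0 /\ Rabs e = - e).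
Proof. unfold Rabs. destruct (Rcase_abs e); [right|left]; split; auto; lra. Qed.

Ltac rabs := repeat match goal with
  | |- context [Rabs ?e] => let H := fresh in destruct (Rabs_spec e) as [[? H]|[? H]]; rewrite H in *; clear H
  | H0 : context [Rabs ?e] |- _ => let H := fresh in destruct (Rabs_spec e) as [[? H]|[? H]]; rewrite H in *; clear H
  end; lra.

Lemma Pt_sub {G : group} (A B : G -> Prop) b : free_product A B -> subgroup (Pt A B b).
Proof. intros [HA [HB _]]. destruct b; auto. Qed.

Lemma left_letter {G : group} (A B : G -> Prop) fA fB b h D :
  free_product A B -> alternating_on (Pt A B b) (ft fA fB b) ->
  (forall x y, Pt A B b x -> Pt A B b y -> Rabs (ft fA fB b x + ft fA fB b y - ft fA fB b (gmul x y)) <= D) ->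
  Pt A B b h ->
  forall x, Rabs (split_fun A B fA fB (gmul h x) - split_fun A B fA fB x) <= D + Rabs (ft fA fB b h).
Proof.
  intros HF Halt HQ Hh x.
  pose proof (Pt_sub A B b HF) as [S1 [S2 S3]].
  assert (HD : 0 <= D). { specialize (HQ _ _ S1 S1). rabs. }
  destruct (classic (h = gone G)) as [E|Hn].
  { subst h. rewrite gmul1. rabs. }
  pose proof HF as [_ [_ HU]]. destruct (HU x) as [w [[Hw <-] _]].
  destruct w as [|[b' a] w'].
  - simpl. rewrite gmul1r.
    assert (E1 : split_fun A B fA fB h = ft fA fB b h + 0).
    { rewrite <- (gmul1r h) at 1. change (gmul h (gone G)) with (wprod ((b, h) :: nil)).
      rewrite split_eval; auto. split; [constructor; [apply letter_ok_Pt; auto|constructor]|simpl; auto]. }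
    assert (E2 : split_fun A B fA fB (gone G) = 0).
    { change (gone G) with (wprod (@nil (bool*G))). rewrite split_eval; auto. }
    rewrite E1, E2. rabs.
  - destruct (Bool.bool_dec b' b) as [Eb|Eb].
    + subst b'. simpl wprod. rewrite gmulA.
      destruct (classic (gmul h a = gone G)) as [Ec|Ec].
      * rewrite Ec, gmul1.
        pose proof (inv_uniq _ _ Ec) as Ea.
        rewrite (split_eval _ _ _ _ ((b,a)::w')); auto.
        rewrite split_eval; auto. 2:{ eapply reduced_tail; eauto. }
        rewrite wsum_cons. rewrite Ea, Halt; auto. rabs.
      * assert (Hr : reduced A B ((b, gmul h a) :: w')).
        { destruct Hw as [Hw1 Hw2]. inversion Hw1; subst.
          simpl in H1. split.
          - constructor; auto. apply letter_ok_Pt. split; auto. apply S2; [exact Hh|exact (proj1 H1)].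
          - destruct w' as [|l w'']; simpl in *; auto. }
        change (gmul (gmul h a) (wprod w')) with (wprod ((b, gmul h a) :: w')).
        rewrite !split_eval; auto.
        change (gmul a (wprod w')) with (wprod ((b, a) :: w')).
        rewrite split_eval; auto. rewrite !wsum_cons.
        destruct Hw as [Hw1 _]. inversion Hw1; subst. simpl in H1.
        specialize (HQ h a Hh (proj1 H1)). rabs.
    + assert (Hr : reduced A B ((b, h) :: (b', a) :: w')).
      { destruct Hw as [Hw1 Hw2]. split.
        - constructor; auto. apply letter_ok_Pt; auto.
        - simpl. split; auto. }
      change (gmul h (wprod ((b', a) :: w'))) with (wprod ((b, h) :: (b', a) :: w')).
      rewrite !split_eval; auto. rewrite wsum_cons. rabs.
Qed.

Lemma Pt_alt {G : group} (A B : G -> Prop) fA fB b :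
  alternating_on A fA -> alternating_on B fB -> alternating_on (Pt A B b) (ft fA fB b).
Proof. destruct b; auto. Qed.

Lemma Pt_quasi {G : group} (A B : G -> Prop) fA fB b :
  quasimorphism_on A fA -> quasimorphism_on B fB -> exists D,
  forall x y, Pt A B b x -> Pt A B b y -> Rabs (ft fA fB b x + ft fA fB b y - ft fA fB b (gmul x y)) <= D.
Proof. destruct b; auto. Qed.

Lemma left_gen {G : group} (A B : G -> Prop) fA fB :
  free_product A B -> alternating_on A fA -> alternating_on B fB ->
  quasimorphism_on A fA -> quasimorphism_on B fB ->
  forall h, exists C, forall x,
    Rabs (split_fun A B fA fB (gmul h x) - split_fun A B fA fB x) <= C.
Proof.
  intros HF HaA HaB HqA HqB h.
  pose proof HF as [_ [_ HU]]. destruct (HU h) as [w [[[Hw _] <-] _]].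
  induction Hw as [|[b a] w Hl Hw IH].
  - exists 0. intro x. simpl. rewrite gmul1. rabs.
  - destruct IH as [C IH]. destruct (Pt_quasi A B fA fB b HqA HqB) as [D HD].
    simpl in Hl.
    pose proof (left_letter A B fA fB b a D HF (Pt_alt A B fA fB b HaA HaB) HD (proj1 Hl)) as HL.
    exists (D + Rabs (ft fA fB b a) + C). intro x.
    simpl. rewrite <- gmulA. specialize (HL (gmul (wprod w) x)). specialize (IH x). rabs.
Qed.

Definition inv_word {G : group} (w : list (bool * G)) := rev (map (fun l => (fst l, ginv (snd l))) w).

Lemma wprod_inv_word {G : group} (w : list (bool * G)) : wprod (inv_word w) = ginv (wprod w).
Proof.
  induction w as [|l w IH]; unfold inv_word in *; simpl. symmetry; apply ginv_one.
  rewrite wprod_app, IH. simpl. rewrite gmul1r, ginv_mul. reflexivity.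
Qed.

Lemma wsum_inv_word {G : group} A B fA fB (w : list (bool * G)) :
  alternating_on A fA -> alternating_on B fB -> Forall (letter_ok A B) w ->
  wsum fA fB (inv_word w) = - wsum fA fB w.
Proof.
  intros HaA HaB H. induction H as [|[b a] w Hl Hw IH]; unfold inv_word in *; simpl. lra.
  rewrite wsum_app, IH. simpl. destruct Hl as [Hl _]. simpl in Hl.
  destruct b; [rewrite HaA|rewrite HaB]; auto; lra.
Qed.

Lemma reduced_inv_word {G : group} A B (w : list (bool * G)) :
  free_product A B -> reduced A B w -> reduced A B (inv_word w).
Proof.
  intros HF [H1 H2]. split.
  - unfold inv_word. apply Forall_rev, Forall_map. eapply Forall_impl; [|exact H1].
    intros [b a] [Ha Hn]. simpl in *. split.
    + destruct (Pt_sub A B b HF) as [_ [_ S3]]. exact (S3 a Ha).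
    + simpl. intro E. apply Hn. rewrite <- (ginv_inv a), E. apply ginv_one.
  - unfold inv_word. apply alt_rev. apply alt_map; auto.
Qed.

Lemma split_inv {G : group} A B fA fB (x : G) :
  free_product A B -> alternating_on A fA -> alternating_on B fB ->
  split_fun A B fA fB (ginv x) = - split_fun A B fA fB x.
Proof.
  intros HF HaA HaB. pose proof HF as [_ [_ HU]]. destruct (HU x) as [w [[Hw <-] _]].
  rewrite <- wprod_inv_word, !split_eval; auto.
  - eapply wsum_inv_word; eauto. apply Hw.
  - apply reduced_inv_word; auto.
Qed.

Lemma right_gen {G : group} (A B : G -> Prop) fA fB :
  free_product A B -> alternating_on A fA -> alternating_on B fB ->
  quasimorphism_on A fA -> quasimorphism_on B fB ->
  forall h, exists C, forall x,
    Rabs (split_fun A B fA fB (gmul x h) - split_fun A B fA fB x) <= C.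
Proof.
  intros HF HaA HaB HqA HqB h.
  destruct (left_gen A B fA fB HF HaA HaB HqA HqB (ginv h)) as [C HC].
  exists C. intro x. specialize (HC (ginv x)).
  rewrite <- ginv_mul, !split_inv in HC; auto. rabs.
Qed.

Lemma dist_conj {G : group} (A B : G -> Prop) fA fB :
  free_product A B -> alternating_on A fA -> alternating_on B fB ->
  quasimorphism_on A fA -> quasimorphism_on B fB ->
  forall g, exists C, forall x,
    Rabs (split_fun A B fA fB x - split_fun A B fA fB (conj (ginv g) x)) <= C.
Proof.
  intros HF HaA HaB HqA HqB g.
  destruct (left_gen A B fA fB HF HaA HaB HqA HqB g) as [C1 H1].
  destruct (right_gen A B fA fB HF HaA HaB HqA HqB g) as [C2 H2].
  exists (C1 + C2). intro x. unfold conj. rewrite ginv_inv.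
  specialize (H2 (gmul (ginv g) x)). specialize (H1 (gmul (ginv g) x)).
  rewrite gmulA, gmulV', gmul1 in H1. rabs.
Qed.

Lemma split_conj {G : group} (A B : G -> Prop) fA fB (g x : G) :
  free_product A B ->
  split_fun (img (conj g) A) (img (conj g) B) (fun y => fA (conj (ginv g) y))
            (fun y => fB (conj (ginv g) y)) x = split_fun A B fA fB (conj (ginv g) x).
Proof.
  intro HF. rewrite <- (conj_conj_inv g x) at 1.
  rewrite split_img; auto using conj_aut.
  apply split_ext; auto; intros; rewrite conj_inv_conj; auto.
Qed.

Lemma sb_sym {G : group} (c1 c2 : G -> G -> R) : same_bclass c1 c2 -> same_bclass c2 c1.
Proof.
  intros [b [[C HC] Hb]]. exists (fun x => - b x). split.
  - exists C. intro x. rewrite Rabs_Ropp. auto.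
  - intros g h. specialize (Hb g h). unfold dcob in *. lra.
Qed.

Lemma sb_trans {G : group} (c1 c2 c3 : G -> G -> R) : same_bclass c1 c2 -> same_bclass c2 c3 -> same_bclass c1 c3.
Proof.
  intros [b [[C HC] Hb]] [b' [[C' HC'] Hb']]. exists (fun x => b x + b' x). split.
  - exists (C + C'). intro x. specialize (HC x). specialize (HC' x). rabs.
  - intros g h. specialize (Hb g h). specialize (Hb' g h). unfold dcob in *. lra.
Qed.

Lemma sb_dist {G : group} (f f' : G -> R) : (exists C, forall x, Rabs (f x - f' x) <= C) ->
  same_bclass (dcob f) (dcob f').
Proof.
  intros [C HC]. exists (fun x => f x - f' x). split.
  - exists C. auto.
  - intros g h. unfold dcob. lra.
Qed.

Lemma bounded_quasi {G : group} (A : G -> Prop) f : subgroup A -> bounded_on A f -> quasimorphism_on A f.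
Proof.
  intros [_ [S2 _]] [C HC]. exists (3 * C). intros x y Hx Hy.
  pose proof (HC x Hx). pose proof (HC y Hy). pose proof (HC _ (S2 x y Hx Hy)). rabs.
Qed.

Lemma S_conj {G : group} (A B : G -> Prop) (g : G) : free_product A B ->
  forall c, in_split_space A B c <-> in_split_space (img (conj g) A) (img (conj g) B) c.
Proof.
  intros HF c. pose proof HF as [SA [SB _]].
  pose proof (free_img (conj g) A B (conj_aut g) HF) as HF'.
  split.
  - intros [fA [fB [bA [aA [bB [aB Hc]]]]]].
    exists (fun y => fA (conj (ginv g) y)), (fun y => fB (conj (ginv g) y)).
    split; [|split; [|split; [|split]]].
    + destruct bA as [C HC]. exists C. intros y [a [Ha <-]]. rewrite conj_inv_conj. auto.
    + intros y [a [Ha <-]]. rewrite <- hom_inv by apply conj_ghom. rewrite !conj_inv_conj. auto.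
    + destruct bB as [C HC]. exists C. intros y [a [Ha <-]]. rewrite conj_inv_conj. auto.
    + intros y [a [Ha <-]]. rewrite <- hom_inv by apply conj_ghom. rewrite !conj_inv_conj. auto.
    + eapply sb_trans; [exact Hc|]. apply sb_dist.
      destruct (dist_conj A B fA fB HF aA aB (bounded_quasi A fA SA bA) (bounded_quasi B fB SB bB) g)
        as [C HC].
      exists C. intro x. rewrite split_conj; auto.
  - intros [hA [hB [bA [aA [bB [aB Hc]]]]]].
    exists (fun a => hA (conj g a)), (fun a => hB (conj g a)).
    assert (bA' : bounded_on A (fun a => hA (conj g a))).
    { destruct bA as [C HC]. exists C. intros a Ha. apply HC. exists a; auto. }
    assert (bB' : bounded_on B (fun a => hB (conj g a))).
    { destruct bB as [C HC]. exists C. intros a Ha. apply HC. exists a; auto. }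
    assert (aA' : alternating_on A (fun a => hA (conj g a))).
    { intros a Ha. rewrite hom_inv by apply conj_ghom. apply aA. exists a; auto. }
    assert (aB' : alternating_on B (fun a => hB (conj g a))).
    { intros a Ha. rewrite hom_inv by apply conj_ghom. apply aB. exists a; auto. }
    split; [|split; [|split; [|split]]]; auto.
    assert (E : split_fun (img (conj g) A) (img (conj g) B) hA hB =
                fun x => split_fun A B (fun a => hA (conj g a)) (fun a => hB (conj g a)) (conj (ginv g) x)).
    { apply functional_extensionality. intro x. rewrite <- split_conj; auto.
      apply split_ext; auto; intros; rewrite conj_conj_inv; auto. }
    rewrite E in Hc. eapply sb_trans; [exact Hc|]. apply sb_sym, sb_dist.
    destruct (dist_conj A B _ _ HF aA' aB' (bounded_quasi A _ SA bA') (bounded_quasi B _ SB bB') g)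
      as [C HC].
    exists C. auto.
Qed.

Theorem proposition3p15 (G : group) (A B : G -> Prop) (fA fB : G -> R) (g : G) :
  free_product A B -> nontrivial A -> nontrivial B ->
  alternating_on A fA -> quasimorphism_on A fA ->
  alternating_on B fB -> quasimorphism_on B fB ->
  let sA := img (conj g) A in
  let sB := img (conj g) B in
  let f := split_fun A B fA fB in
  let fs := split_fun sA sB (fun y => fA (conj (ginv g) y))
                            (fun y => fB (conj (ginv g) y)) in
  (* f is at bounded distance from f^sigma *)
  (exists C, forall x, Rabs (f x - fs x) <= C) /\
  (* omega_f = omega_{f^sigma} in H^2_b *)
  same_bclass (dcob f) (dcob fs) /\
  (* S = S^sigma *)
  (forall c, in_split_space A B c <-> in_split_space sA sB c) /\
  (* S^tau only depends on the outer class of tau *)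
  (forall t1 t2 : G -> G, automorphism t1 -> automorphism t2 ->
     (exists h : G, forall x, t2 x = conj h (t1 x)) ->
     forall c, in_split_space (img t1 A) (img t1 B) c <->
               in_split_space (img t2 A) (img t2 B) c).
Proof.
  intros HF _ _ HaA HqA HaB HqB sA sB f fs.
  assert (H1 : exists C, forall x, Rabs (f x - fs x) <= C).
  { destruct (dist_conj A B fA fB HF HaA HaB HqA HqB g) as [C HC].
    exists C. intro x. unfold fs, sA, sB. rewrite split_conj; auto. }
  split; [exact H1|split; [apply sb_dist; exact H1|split]].
  - apply S_conj; auto.
  - intros t1 t2 Ht1 Ht2 [h Hh] c.
    assert (EA : forall P, img t2 P = img (conj h) (img t1 P)).
    { intro P. apply functional_extensionality. intro y. apply propositional_extensionality.
      split.
      - intros [x [Hx <-]]. exists (t1 x). split; [exists x; auto|]. symmetry; apply Hh.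
      - intros [z [[x [Hx <-]] <-]]. exists x. split; auto. }
    rewrite !EA. apply S_conj. apply free_img; auto.
Qed.
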